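(* Let $X\in\mathbb{R}^{n\times r}$ with $X^{\mathsf{T}}X=I_r$ represent a point of $\operatorname{Gr}(n,r)$ and let $X_\perp\in\mathbb{R}^{n\times(n-r)}$ be such that $[X\;X_\perp]$ is orthogonal. Let $\Delta\in\mathbf{T}_X$, let $X(t)$ be the geodesic and $T_{X,\Delta}(t)$ the transport matrix determined by $\Delta$, and let $X_\perp(t)=T_{X,\Delta}(t)X_\perp$. Identify $\mathbf{T}_X$ with $\mathbb{R}^{(n-r)r}$ via $\Delta_1=X_\perp D_1\mapsto \operatorname{vec}(D_1)$, and consider a linear operator in local coordinates $\hat A:\mathbb{R}^{(n-r)r}\to\mathbb{R}^{(n-r)r}$ together with the corresponding linear operator in global coordinates $A:\mathbb{R}^{nr}\to\mathbb{R}^{nr}$ (in which tangents in $\mathbf{T}_X$ are embedded via $\Delta_1\mapsto\operatorname{vec}(\Delta_1)$). Then \[ A=(I\otimes X_\perp)\hat A(I\otimes X_\perp^{\mathsf{T}}),\qquad \hat A=(I\otimes X_\perp^{\mathsf{T}})A(I\otimes X_\perp). \] Furthermore, the parallel transported operator has the same local representation for all $t$ along the geodesic: if $A(t)=(I\otimes T_{X,\Delta}(t))\,A\,(I\otimes \widetilde T(t))$, where $\widetilde T(t)=T_{X(t),-\Delta(t)}(t)$ with $\Delta(t)=T_{X,\Delta}(t)\Delta$ is the transport matrix from $X(t)$ back to $X$ along the same geodesic, and $\hat A(t)=(I\otimes X_\perp(t)^{\mathsf{T}})A(t)(I\otimes X_\perp(t))$, then $\hat A(t)=\hat A$ for all 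$t$.
   Context: Points of $\operatorname{Gr}(n,r)$ are represented by $n\times r$ matrices with orthonormal columns; $\mathbf{T}_X=\{\Delta\in\mathbb{R}^{n\times r}:X^{\mathsf{T}}\Delta=0\}$, and every tangent can be written $\Delta=X_\perp D$ with $D=X_\perp^{\mathsf{T}}\Delta\in\mathbb{R}^{(n-r)\times r}$ (local coordinates). For $\Delta=U\Sigma V^{\mathsf{T}}$ a thin SVD, the geodesic is $X(t)=[XV\;U]\begin{bmatrix}\cos\Sigma t\\ \sin\Sigma t\end{bmatrix}V^{\mathsf{T}}$ and the transport matrix is $T_{X,\Delta}(t)=[XV\;U]\begin{bmatrix}-\sin\Sigma t\\ \cos\Sigma t\end{bmatrix}U^{\mathsf{T}}+(I-UU^{\mathsf{T}})$; a tangent $\Delta_2\in\mathbf{T}_X$ is parallel transported to $T_{X,\Delta}(t)\Delta_2\in\mathbf{T}_{X(t)}$. $\operatorname{vec}$ is column-wise vectorization, $I=I_r$, and $\otimes$ is the Kronecker product, so $\operatorname{vec}(X_\perp D)=(I_r\otimes X_\perp)\operatorname{vec}(D)$. The global-coordinate operator $A$ corresponding to $\hat A$ is the operator that maps $\operatorname{vec}(X_\perp D_1)$ to $\operatorname{vec}(X_\perp D_2)$ whenever $\operatorname{vec}(D_2)=\hat A\operatorname{vec}(D_1)$, acting on vectorized tangents through the projection $I\otimes X_\perp X_\perp^{\mathsf{T}}$ onto the tangent space. *)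

(* Defs.v *)
From HB Require Import structures.
From mathcomp Require Import all_boot all_order all_algebra.
From mathcomp Require Import all_classical all_reals all_analysis.

Set Implicit Arguments.
Unset Strict Implicit.
Unset Printing Implicit Defensive.

Import Order.TTheory GRing.Theory Num.Theory.
Local Open Scope ring_scope.

(* Column-wise vectorization: vec M (M : m x k) is the column vector of
   length k*m whose entry at index [mxvec_index j i] is M i j. *)
Definition vec (R : Type) (m k : nat) (M : 'M[R]_(m, k)) : 'cV[R]_(k * m) :=
  (mxvec M^T)^T.

(* Kronecker product, consistent with [vec]:
   (kron A B) (mxvec_index a i) (mxvec_index b j) = A a b * B i j,
   so that vec (X *m D) = kron 1 X *m vec D. *)
Definition kron (R : pzRingType) (p q m k : nat)
    (A : 'M[R]_(p, q)) (B : 'M[R]_(m, k)) : 'M[R]_(p * m, q * k) :=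
  \matrix_(I, J)
    (let ai := enum_val (cast_ord (esym (mxvec_cast p m)) I) in
     let bj := enum_val (cast_ord (esym (mxvec_cast q k)) J) in
     A ai.1 bj.1 * B ai.2 bj.2).

Section Grassmann.
Variable R : realType.

Definition cosS (r : nat) (s : 'rV[R]_r) (t : R) : 'M[R]_r :=
  diag_mx (\row_i cos (s 0 i * t)).
Definition sinS (r : nat) (s : 'rV[R]_r) (t : R) : 'M[R]_r :=
  diag_mx (\row_i sin (s 0 i * t)).

Definition thin_svd (n r : nat) (D U : 'M[R]_(n, r)) (s : 'rV[R]_r)
    (V : 'M[R]_r) : Prop :=
  [/\ U^T *m U = 1%:M, V^T *m V = 1%:M /\ V *m V^T = 1%:M,
      (forall i, 0 <= s 0 i),
      (forall i j : 'I_r, (i <= j)%N -> s 0 j <= s 0 i)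
    & D = U *m diag_mx s *m V^T].

Definition geodesic (n r : nat) (X U : 'M[R]_(n, r)) (s : 'rV[R]_r)
    (V : 'M[R]_r) (t : R) : 'M[R]_(n, r) :=
  row_mx (X *m V) U *m col_mx (cosS s t) (sinS s t) *m V^T.

Definition transport (n r : nat) (X U : 'M[R]_(n, r)) (s : 'rV[R]_r)
    (V : 'M[R]_r) (t : R) : 'M[R]_n :=
  row_mx (X *m V) U *m col_mx (- sinS s t) (cosS s t) *m U^T
  + (1%:M - U *m U^T).

(* A (global coordinates, acting on vec of n x r matrices) is the operator
   corresponding to Ahat (local coordinates w.r.t. Xp): it maps
   vec(Xp D1) to vec(Xp D2) whenever vec(D2) = Ahat vec(D1), and it acts
   on vectorized matrices through the projection I (x) Xp Xp^T onto the
   tangent space. *)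
Definition global_op (n r k : nat) (Xp : 'M[R]_(n, k))
    (Ahat : 'M[R]_(r * k)) (A : 'M[R]_(r * n)) : Prop :=
  (forall D1 D2 : 'M[R]_(k, r),
      vec D2 = Ahat *m vec D1 -> A *m vec (Xp *m D1) = vec (Xp *m D2))
  /\ A = A *m kron (1%:M : 'M[R]_r) (Xp *m Xp^T).

End Grassmann.

(* Main.v *)
Require Import Defs.
From HB Require Import structures.
From mathcomp Require Import all_boot all_order all_algebra.
From mathcomp Require Import all_classical all_reals all_analysis.
From mathcomp Require Import ring.

Import Order.TTheory GRing.Theory Num.Theory.
Local Open Scope ring_scope.

Module Part1.


Section K.
Variable R : comPzRingType.

Lemma kronE p q m k (A : 'M[R]_(p,q)) (B : 'M[R]_(m,k)) a i b j :
  kron A B (mxvec_index a i) (mxvec_index b j) = A a b * B i j.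
Proof. by rewrite mxE /mxvec_index !cast_ordK !enum_rankK. Qed.

Lemma vecE m k (M : 'M[R]_(m,k)) a i : vec M (mxvec_index a i) 0 = M i a.
Proof. by rewrite /vec mxE mxvecE mxE. Qed.

Lemma kron_mul p q l m k h (A : 'M[R]_(p,q)) (B : 'M[R]_(m,k)) (C : 'M[R]_(q,l)) (D : 'M[R]_(k,h)) :
  kron A B *m kron C D = kron (A *m C) (B *m D).
Proof.
apply/matrixP=> I J; case/mxvec_indexP: I => a i; case/mxvec_indexP: J => c d.
rewrite mxE kronE !mxE (reindex _ (curry_mxvec_bij _ _)) /=.
rewrite [RHS]big_distrl /=.
rewrite (eq_bigr (fun b => \sum_(j < k) (A a b * C b c) * (B i j * D j d))); last by move=> b _; rewrite big_distrr.
rewrite pair_bigA; apply: eq_bigr => [[b j]] _ /=; rewrite !kronE.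
by rewrite mulrACA.
Qed.

Lemma mxvec_index_inj m k (a b : 'I_m) (i j : 'I_k) :
  (mxvec_index a i == mxvec_index b j) = ((a == b) && (i == j)).
Proof.
rewrite /mxvec_index (inj_eq (@cast_ord_inj _ _ _)) (inj_eq (@enum_rank_inj _)).
by rewrite xpair_eqE.
Qed.

Lemma kron1 m k : kron (1%:M : 'M[R]_m) (1%:M : 'M[R]_k) = 1%:M.
Proof.
apply/matrixP=> I J; case/mxvec_indexP: I => a i; case/mxvec_indexP: J => b j.
rewrite kronE !mxE mxvec_index_inj.
by rewrite -natrM mulnb.
Qed.

Lemma kron_vec m n k (X : 'M[R]_(n, m)) (D : 'M[R]_(m, k)) :
  kron (1%:M : 'M[R]_k) X *m vec D = vec (X *m D).
Proof.
apply/matrixP=> I z; rewrite (ord1 z); case/mxvec_indexP: I => a i.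
rewrite vecE !mxE (reindex _ (curry_mxvec_bij _ _)) /=.
transitivity (\sum_(b < k) \sum_(j < m) kron 1%:M X (mxvec_index a i) (mxvec_index b j) * vec D (mxvec_index b j) 0).
  by rewrite pair_bigA; apply: eq_bigr => -[b j].
rewrite (bigD1 a) //= [X in _ + X]big1 ?addr0.
  by apply: eq_bigr => j _; rewrite kronE vecE mxE eqxx mul1r.
move=> b /negPf nab; apply: big1 => j _; rewrite kronE mxE eq_sym nab.
by rewrite !mul0r.
Qed.
End K.

End Part1.
Import Part1.
Module Part2.
Set Implicit Arguments.
Unset Strict Implicit.


Section Fd.
Variable R : realType.
Variable r : nat.
Definition Fd (f : R -> R) (s : 'rV[R]_r) : 'M[R]_r := diag_mx (\row_i f (s 0 i)).

Lemma FdM f g s : Fd f s *m Fd g s = Fd (fun x => f x * g x) s.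
Proof. by rewrite /Fd mulmx_diag; congr diag_mx; apply/rowP=> i; rewrite !mxE. Qed.

Lemma FdD f g s : Fd f s + Fd g s = Fd (fun x => f x + g x) s.
Proof. by rewrite /Fd -raddfD /=; congr diag_mx; apply/rowP=> i; rewrite !mxE. Qed.

Lemma FdN f s : - Fd f s = Fd (fun x => - f x) s.
Proof. by rewrite /Fd -raddfN /=; congr diag_mx; apply/rowP=> i; rewrite !mxE. Qed.

Lemma Fd1 s : Fd (fun _ => 1) s = 1%:M.
Proof. by rewrite /Fd -diag_const_mx; congr diag_mx; apply/rowP=> i; rewrite !mxE. Qed.

Lemma Fd0 s : Fd (fun _ => 0) s = 0.
Proof. by rewrite /Fd -(linear0 (@diag_mx R r)); congr diag_mx; apply/rowP=> i; rewrite !mxE. Qed.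

Lemma Fd_ext f g (s : 'rV[R]_r) : (forall i, f (s 0 i) = g (s 0 i)) -> Fd f s = Fd g s.
Proof. by move=> H; rewrite /Fd; congr diag_mx; apply/rowP=> i; rewrite !mxE. Qed.

Lemma FdT f s : (Fd f s)^T = Fd f s.
Proof. exact: tr_diag_mx. Qed.

Lemma Fd_id (s : 'rV[R]_r) : diag_mx s = Fd id s.
Proof. by rewrite /Fd; congr diag_mx; apply/rowP=> i; rewrite !mxE. Qed.

Lemma mul_Fd0 k (W : 'M[R]_(k, r)) (s : 'rV[R]_r) f :
  W *m diag_mx s = 0 -> f 0 = 0 -> W *m Fd f s = 0.
Proof.
move=> H f0; apply/matrixP=> i j; have := congr1 (fun M : 'M[R]_(k,r) => M i j) H.
rewrite /Fd !mul_mx_diag !mxE; have [->|nz] := eqVneq (s 0 j) 0.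
  by rewrite f0 mulr0.
by move/eqP; rewrite mulf_eq0 (negPf nz) orbF => /eqP ->; rewrite mul0r.
Qed.

Lemma Fd0_mul k (W : 'M[R]_(r, k)) (s : 'rV[R]_r) f :
  diag_mx s *m W = 0 -> f 0 = 0 -> Fd f s *m W = 0.
Proof.
move=> H f0; apply: trmx_inj; rewrite trmx_mul FdT trmx0; apply: mul_Fd0 => //.
by rewrite -[diag_mx s]tr_diag_mx -trmx_mul H trmx0.
Qed.

Lemma Fd_comm (O : 'M[R]_r) (s s2 : 'rV[R]_r) f :
  (forall i, 0 <= s 0 i) -> (forall i, 0 <= s2 0 i) ->
  O *m Fd (fun x => x ^+ 2) s = Fd (fun x => x ^+ 2) s2 *m O ->
  O *m Fd f s = Fd f s2 *m O.
Proof.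
move=> p1 p2 H; apply/matrixP=> i j; have := congr1 (fun M : 'M[R]_r => M i j) H.
rewrite /Fd !mul_mx_diag !mul_diag_mx !mxE.
have [->|nz] := eqVneq (O i j) 0; first by rewrite !mulr0 !mul0r.
move=> /eqP; rewrite mulrC -subr_eq0 -mulrBl mulf_eq0 (negPf nz) orbF subr_eq0.
by rewrite eqrXn2 // => /eqP ->; rewrite mulrC.
Qed.
End Fd.
Arguments Fd {R r}.

End Part2.
Import Part2.
Module Part3.
Set Implicit Arguments.
Unset Strict Implicit.


Section Core.
Variable R : realType.

Lemma core_iso n r k (X U : 'M[R]_(n,r)) (Xp : 'M[R]_(n,k)) (V c sn : 'M[R]_r) :
 U^T *m U = 1%:M -> X^T *m X = 1%:M -> V^T *m V = 1%:M -> Xp^T *m X = 0 -> Xp^T *m Xp = 1%:M ->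
 X^T *m U *m (c - 1%:M) = 0 -> c^T = c -> sn^T = sn ->
 (c - 1%:M) *m (c - 1%:M) + sn *m sn + (c - 1%:M) *+ 2 = 0 ->
 let M := U *m (c - 1%:M) - X *m (V *m sn) in
 let T := 1%:M + M *m U^T in
 (T *m Xp)^T *m (T *m Xp) = 1%:M.
Proof.
move=> UU XX VV XpX XpXp Zc cT snT trig M T.
have cT1 : (c - 1%:M)^T = c - 1%:M by rewrite raddfB /= cT trmx1.
have e1 : Xp^T *m M = Xp^T *m U *m (c - 1%:M).
  by rewrite /M mulmxBr !mulmxA XpX !mul0mx subr0.
have e1' : M^T *m Xp = (c - 1%:M) *m (U^T *m Xp).
  by apply: trmx_inj; rewrite trmx_mul trmxK e1 !trmx_mul trmxK cT1.
have e2 : M^T *m M = (c - 1%:M) *m (c - 1%:M) + sn *m sn.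
  have -> : M^T = (c - 1%:M) *m U^T - sn *m V^T *m X^T.
    by rewrite /M (raddfB (@trmx R n r)) /= !trmx_mul cT1 snT.
  rewrite /M; set c1 := c - 1%:M; rewrite -/c1 in Zc cT1; clearbody c1.
  have f1 : c1 *m U^T *m (U *m c1) = c1 *m c1.
    by rewrite mulmxA -(mulmxA _ U^T) UU mulmx1.
  have f2 : c1 *m U^T *m (X *m (V *m sn)) = 0.
    have h : c1 *m U^T *m X = 0.
      by apply: trmx_inj; rewrite !trmx_mul trmxK cT1 trmx0 mulmxA Zc.
    by rewrite mulmxA h mul0mx.
  have f3 : sn *m V^T *m X^T *m (U *m c1) = 0.
    by rewrite -!mulmxA (mulmxA X^T) Zc !mulmx0.
  have f4 : sn *m V^T *m X^T *m (X *m (V *m sn)) = sn *m sn.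
    by rewrite mulmxA -(mulmxA _ X^T) XX mulmx1 mulmxA -(mulmxA sn) VV mulmx1.
  by rewrite mulmxBl !mulmxBr f1 f2 f3 f4 subr0 sub0r opprK.
have eT : T *m Xp = Xp + M *m (U^T *m Xp) by rewrite /T mulmxDl mul1mx mulmxA.
rewrite eT (raddfD (@trmx R n k)) /= !trmx_mul trmxK.
rewrite mulmxDl !mulmxDr XpXp.
set B := Xp^T *m U; set a := U^T *m Xp.
rewrite (mulmxA Xp^T M a) e1 -/B -(mulmxA B M^T Xp) e1' -/a.
rewrite (mulmxA (B *m M^T) M a) -(mulmxA B M^T M) e2.
rewrite -[RHS]addr0 -addrA; congr (_ + _).
rewrite (mulmxA B (c - 1%:M) a) -mulmxDl -mulmxDl -mulmxDr.
rewrite -mulmxDr.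
have -> : c - 1%:M + (c - 1%:M + ((c - 1%:M) *m (c - 1%:M) + sn *m sn)) = 0.
  by rewrite addrA -mulr2n addrC.
by rewrite mulmx0 mul0mx.
Qed.
End Core.

End Part3.
Import Part3.
Module Part4.
Set Implicit Arguments.
Unset Strict Implicit.


Section Core.
Variable R : realType.

Lemma core_back n r k (X U : 'M[R]_(n,r)) (Xp : 'M[R]_(n,k)) (V c sn : 'M[R]_r) :
 U^T *m U = 1%:M -> X^T *m X = 1%:M -> V^T *m V = 1%:M -> Xp^T *m X = 0 -> Xp^T *m Xp = 1%:M ->
 X^T *m U *m (c - 1%:M) = 0 -> c^T = c -> sn^T = sn ->
 sn *m sn + c *m (c - 1%:M) = 1%:M - c ->
 let P := U *m c - X *m (V *m sn) in
 let Q := X *m (V *m c) + U *m sn in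
 let M := P - U in
 let T := 1%:M + M *m U^T in
 let Tt := 1%:M + Q *m sn *m P^T + P *m (c - 1%:M) *m P^T in
 Xp^T *m Tt *m (T *m Xp) = 1%:M.
Proof.
move=> UU XX VV XpX XpXp Zc cT snT trig P Q M T Tt.
have cT1 : (c - 1%:M)^T = c - 1%:M by rewrite raddfB /= cT trmx1.
have XXp : X^T *m Xp = 0 by apply: trmx_inj; rewrite trmx_mul trmxK XpX trmx0.
set B := Xp^T *m U; set a := U^T *m Xp.
have eQ : Xp^T *m Q = B *m sn.
  by rewrite /Q mulmxDr !mulmxA XpX !mul0mx add0r.
have eP : Xp^T *m P = B *m c.
  by rewrite /P mulmxBr !mulmxA XpX !mul0mx subr0.
have PT : P^T = c *m U^T - sn *m V^T *m X^T.
  by rewrite /P (raddfB (@trmx R n r)) /= !trmx_mul cT snT.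
have ePX : P^T *m Xp = c *m a.
  by rewrite PT mulmxBl -!mulmxA XXp !mulmx0 subr0.
have eT : T *m Xp = Xp + M *m a by rewrite /T mulmxDl mul1mx mulmxA.
have eM : Xp^T *m M = B *m (c - 1%:M).
  by rewrite /M mulmxBr eP mulmxBr mulmx1.
have ePM : (1%:M - c) *m (P^T *m M) = (1%:M - c) *m (1%:M - c).
  have -> : M = U *m (c - 1%:M) - X *m (V *m sn).
    by rewrite /M /P mulmxBr mulmx1 addrAC.
  rewrite PT; set c1 := c - 1%:M.
  have h0 : c1 *m U^T *m X = 0.
    by apply: trmx_inj; rewrite !trmx_mul trmxK cT1 trmx0 mulmxA Zc.
  have g1 : c *m U^T *m (U *m c1) = c *m c1.
    by rewrite mulmxA -(mulmxA c U^T) UU mulmx1.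
  have g3 : sn *m V^T *m X^T *m (U *m c1) = 0.
    by rewrite -!mulmxA (mulmxA X^T) Zc !mulmx0.
  have g4 : sn *m V^T *m X^T *m (X *m (V *m sn)) = sn *m sn.
    by rewrite mulmxA -(mulmxA _ X^T) XX mulmx1 mulmxA -(mulmxA sn) VV mulmx1.
  have g2 : (1%:M - c) *m (c *m U^T *m (X *m (V *m sn))) = 0.
    have -> : (1%:M - c) *m (c *m U^T *m (X *m (V *m sn))) = c *m (- (c1 *m U^T *m X)) *m (V *m sn).
      by rewrite /c1 -!mulmxA -mulNmx opprB !mulmxA (mulmxBl 1%:M c c) mulmxBr mul1mx mulmx1.
    by rewrite h0 oppr0 mulmx0 mul0mx.
  rewrite (mulmxBl (c *m U^T)) (mulmxBr (c *m U^T)) (mulmxBr (sn *m V^T *m X^T)) g1 g3 g4 sub0r opprK.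
  by rewrite addrAC [LHS]mulmxBr g2 subr0 addrC /c1 trig.
have eTt : Xp^T *m Tt = Xp^T + B *m (1%:M - c) *m P^T.
  rewrite /Tt (mulmxDr Xp^T) (mulmxDr Xp^T) mulmx1 -addrA; congr (_ + _).
  rewrite (mulmxA Xp^T) (mulmxA Xp^T Q) eQ (mulmxA Xp^T) (mulmxA Xp^T P) eP.
  by rewrite -trig mulmxDr mulmxDl !mulmxA.
rewrite eTt eT; move: ePM; set d := 1%:M - c => ePM.
rewrite (mulmxDl Xp^T) (mulmxDr Xp^T) (mulmxDr (B *m d *m P^T)) XpXp.
rewrite (mulmxA Xp^T M a) eM -(mulmxA (B *m d) P^T Xp) ePX.
rewrite -(mulmxA (B *m d) P^T) (mulmxA P^T M a) -(mulmxA B d (P^T *m M *m a)) (mulmxA d (P^T *m M) a) ePM.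
rewrite -[RHS]addr0 -addrA; congr (_ + _).
rewrite !mulmxA -!mulmxDl -!mulmxDr -(mulmxA B d) -mulmxDr.
have -> : c - 1%:M + d *m (c + d) = 0.
  by rewrite /d (addrC c (1%:M - c)) subrK mulmx1 addrC addrA subrK subrr.
by rewrite mulmx0 !mul0mx.
Qed.
End Core.

End Part4.
Import Part4.
Module Part5.
Set Implicit Arguments.
Unset Strict Implicit.


Section Br.
Variable R : realType.

Lemma transportE n r (X U : 'M[R]_(n,r)) s V t :
  transport X U s V t = 1%:M + (U *m cosS s t - X *m (V *m sinS s t) - U) *m U^T.
rewrite /transport mul_row_col mulmxN -mulmxA (addrC (- _)) mulmxBl [in RHS]mulmxBl.
by rewrite -[in LHS]mulmxBl addrCA.


Qed.

Lemma geodesicE n r (X U : 'M[R]_(n,r)) s V t :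
  geodesic X U s V t = (X *m (V *m cosS s t) + U *m sinS s t) *m V^T.
Proof. by rewrite /geodesic mul_row_col -mulmxA. Qed.
End Br.

End Part5.
Import Part5.
Module Part6.
Set Implicit Arguments.
Unset Strict Implicit.


Section Br.
Variable R : realType.

Lemma sc1 (t x : R) : x * ((cos (x * t) - 1) / (x ^+ 2)) * x = cos (x * t) - 1.
Proof.
have [->|nz] := eqVneq x 0; first by rewrite !mul0r cos0 subrr.
by field.
Qed.

Lemma sc2 (t x : R) : sin (x * t) / x * x = sin (x * t).
Proof.
have [->|nz] := eqVneq x 0; first by rewrite !mul0r sin0 mulr0.
by field.
Qed.

Variable r : nat.

Lemma c1_fact (s : 'rV[R]_r) t : cosS s t - 1%:M =
  diag_mx s *m Fd (fun x => (cos (x * t) - 1) / (x ^+ 2)) s *m diag_mx s.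
Proof.
have -> : cosS s t = Fd (fun x => cos (x * t)) s by [].
rewrite Fd_id !FdM -(Fd1 s) FdN FdD.
by apply: Fd_ext => i; rewrite sc1.
Qed.

Lemma sn_fact (s : 'rV[R]_r) t : sinS s t = Fd (fun x => sin (x * t) / x) s *m diag_mx s.
Proof.
have -> : sinS s t = Fd (fun x => sin (x * t)) s by [].
by rewrite Fd_id FdM; apply: Fd_ext => i; rewrite sc2.
Qed.
End Br.

End Part6.
Import Part6.
Module Part7.
Set Implicit Arguments.
Unset Strict Implicit.


Section Br.
Variable R : realType.

Lemma PSPS n r (X U : 'M[R]_(n,r)) (V : 'M[R]_r) (s : 'rV[R]_r) t :
  U^T *m U = 1%:M -> X^T *m X = 1%:M -> V^T *m V = 1%:M -> X^T *m U *m diag_mx s = 0 ->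
  let P := U *m cosS s t - X *m (V *m sinS s t) in
  (P *m diag_mx s)^T *m (P *m diag_mx s) = Fd (fun x => x ^+ 2) s.
Proof.
move=> UU XX VV Z0 P.
set cs := Fd (fun x => cos (x * t) * x) s.
set ss := Fd (fun x => sin (x * t) * x) s.
have ePS : P *m diag_mx s = U *m cs - X *m (V *m ss).
  rewrite /P; have -> : cosS s t = Fd (fun x => cos (x * t)) s by [].
  have -> : sinS s t = Fd (fun x => sin (x * t)) s by [].
  by rewrite mulmxBl -!mulmxA Fd_id !FdM.
have h0 : X^T *m U *m cs = 0 by apply: mul_Fd0 => //; rewrite mulr0.
have h0' : cs *m U^T *m X = 0.
  by apply: trmx_inj; rewrite !trmx_mul trmxK FdT trmx0 mulmxA h0.
rewrite ePS (raddfB (@trmx R n r)) /= !trmx_mul !FdT.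
rewrite mulmxBl !mulmxBr.
have -> : cs *m U^T *m (U *m cs) = cs *m cs by rewrite mulmxA -(mulmxA cs) UU mulmx1.
have -> : cs *m U^T *m (X *m (V *m ss)) = 0 by rewrite mulmxA h0' mul0mx.
have -> : ss *m V^T *m X^T *m (U *m cs) = 0 by rewrite -!mulmxA (mulmxA X^T) h0 !mulmx0.
have -> : ss *m V^T *m X^T *m (X *m (V *m ss)) = ss *m ss.
  by rewrite mulmxA -(mulmxA _ X^T) XX mulmx1 mulmxA -(mulmxA ss) VV mulmx1.
rewrite subr0 sub0r opprK !FdM FdD; apply: Fd_ext => i.
by rewrite -[RHS]mul1r -(cos2Dsin2 (s 0 i * t)); ring.
Qed.
End Br.

End Part7.
Import Part7.
Module Part8.
Set Implicit Arguments.
Unset Strict Implicit.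


Section Br.
Variable R : realType.

Lemma TDelta n r (X U : 'M[R]_(n,r)) (V : 'M[R]_r) (s : 'rV[R]_r) t :
  U^T *m U = 1%:M ->
  transport X U s V t *m (U *m diag_mx s *m V^T) =
  (U *m cosS s t - X *m (V *m sinS s t)) *m diag_mx s *m V^T.
Proof.
move=> UU; rewrite transportE mulmxDl mul1mx -!mulmxA (mulmxA U^T U) UU mul1mx.
by rewrite -mulmxDl addrC subrK.
Qed.

Lemma Ttil_eq n r (X U : 'M[R]_(n,r)) (V : 'M[R]_r) (s : 'rV[R]_r) t U2 s2 V2 :
  U^T *m U = 1%:M -> X^T *m X = 1%:M -> V^T *m V = 1%:M -> X^T *m U *m diag_mx s = 0 ->
  (forall i, 0 <= s 0 i) ->
  thin_svd (- (transport X U s V t *m (U *m diag_mx s *m V^T))) U2 s2 V2 ->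
  let c := cosS s t in let sn := sinS s t in
  let P := U *m c - X *m (V *m sn) in
  let Q := X *m (V *m c) + U *m sn in
  transport (geodesic X U s V t) U2 s2 V2 t =
  1%:M + Q *m sn *m P^T + P *m (c - 1%:M) *m P^T.
Proof.
move=> UU XX VV Z0 sp [U2U2 [V2V2 V2V2'] s2p _ eG] c sn P Q.
rewrite TDelta // -/c -/sn -/P in eG.
set S := diag_mx s; set S2 := diag_mx s2.
set O := V2^T *m V.
have OO : O^T *m O = 1%:M.
  by rewrite /O trmx_mul trmxK mulmxA -(mulmxA V^T) V2V2' mulmx1 VV.
have eUS : U2 *m S2 = - (P *m S *m O^T).
  rewrite /O trmx_mul trmxK -(mulmx1 (U2 *m S2)) -V2V2 mulmxA -eG.
  by rewrite !mulNmx !mulmxA.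
have eSU : S2 *m U2^T = - (O *m S *m P^T).
  apply: trmx_inj; rewrite trmx_mul trmxK /S2 tr_diag_mx -/S2 eUS.
  by rewrite (raddfN (@trmx R r n)) /= !trmx_mul !trmxK /S tr_diag_mx mulmxA.
have sq2 : S2 *m S2 = Fd (fun x => x ^+ 2) s2.
  by rewrite /S2 Fd_id FdM; apply: Fd_ext => i; rewrite expr2.
have G : V2 *m Fd (fun x => x ^+ 2) s2 *m V2^T = V *m Fd (fun x => x ^+ 2) s *m V^T.
  have -> : V2 *m Fd (fun x => x ^+ 2) s2 *m V2^T =
      (U2 *m S2 *m V2^T)^T *m (U2 *m S2 *m V2^T).
    rewrite !trmx_mul trmxK /S2 tr_diag_mx -/S2 -sq2.
    by rewrite !mulmxA -(mulmxA _ U2^T U2) U2U2 mulmx1.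
  rewrite -eG (raddfN (@trmx R n r)) /= mulNmx mulmxN opprK.
  rewrite !trmx_mul trmxK -(PSPS t UU XX VV Z0) trmx_mul.
  by rewrite /P !mulmxA.
have comm2 : O *m Fd (fun x => x ^+ 2) s = Fd (fun x => x ^+ 2) s2 *m O.
  transitivity (V2^T *m (V *m Fd (fun x => x ^+ 2) s *m V^T) *m V).
    by rewrite /O -!mulmxA VV mulmx1.
  by rewrite -G /O !mulmxA V2V2 mul1mx.
have commF f : O *m Fd f s = Fd f s2 *m O by apply: Fd_comm.
rewrite transportE geodesicE -/c -/sn -/Q.
set c2 := cosS s2 t; set sn2 := sinS s2 t.
have A1 : (U2 *m c2 - U2) *m U2^T = P *m (c - 1%:M) *m P^T.
  rewrite -{2}(mulmx1 U2) -mulmxBr /c2 c1_fact -/S2 /c c1_fact -/S.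
  set H2 := Fd _ s2; set H := Fd _ s.
  rewrite !mulmxA eUS -!mulmxA eSU mulmxN mulNmx mulmxN opprK -!mulmxA.
  by rewrite (mulmxA V2^T V) -/O (mulmxA H2 O) -commF -mulmxA (mulmxA O^T O) OO mul1mx.
have A2 : Q *m V^T *m (V2 *m sn2) *m U2^T = - (Q *m sn *m P^T).
  rewrite /sn2 sn_fact -/S2 /sn sn_fact -/S.
  set Gs2 := Fd _ s2; set Gs := Fd _ s.
  rewrite -!mulmxA eSU !mulmxN; congr (- _).
  have key : V^T *m V2 *m Gs2 *m (V2^T *m V) = Gs.
    have -> : V^T *m V2 = O^T by rewrite /O trmx_mul trmxK.
    by rewrite -/O -(mulmxA _ Gs2) -commF mulmxA OO mul1mx.
  transitivity (Q *m (V^T *m V2 *m Gs2 *m (V2^T *m V)) *m (S *m P^T)).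
    by rewrite !mulmxA.
  by rewrite key !mulmxA.
rewrite addrAC mulmxBl A1 A2 opprK.
by rewrite (addrC (P *m _ *m _)) addrA.
Qed.
End Br.

End Part8.
Import Part8.
Module Part9.
Set Implicit Arguments.
Unset Strict Implicit.


Section Tr.
Variable R : realType.
Variable r : nat.

Lemma trig1 (s : 'rV[R]_r) t :
  (cosS s t - 1%:M) *m (cosS s t - 1%:M) + sinS s t *m sinS s t + (cosS s t - 1%:M) *+ 2 = 0.
Proof.
have -> : cosS s t = Fd (fun x => cos (x * t)) s by [].
have -> : sinS s t = Fd (fun x => sin (x * t)) s by [].
rewrite -(Fd1 s) FdN FdD !FdM mulr2n !FdD -(Fd0 s); apply: Fd_ext => i.
transitivity (cos (s 0 i * t) ^+ 2 + sin (s 0 i * t) ^+ 2 - 1); first by ring.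
by rewrite cos2Dsin2 subrr.
Qed.

Lemma trig2 (s : 'rV[R]_r) t :
  sinS s t *m sinS s t + cosS s t *m (cosS s t - 1%:M) = 1%:M - cosS s t.
Proof.
have -> : cosS s t = Fd (fun x => cos (x * t)) s by [].
have -> : sinS s t = Fd (fun x => sin (x * t)) s by [].
rewrite -(Fd1 s) !FdN !FdD !FdM FdD; apply: Fd_ext => i.
transitivity (cos (s 0 i * t) ^+ 2 + sin (s 0 i * t) ^+ 2 - cos (s 0 i * t)); first by ring.
by rewrite cos2Dsin2.
Qed.

Lemma Zc_fact k (W : 'M[R]_(k, r)) (s : 'rV[R]_r) t :
  W *m diag_mx s = 0 -> W *m (cosS s t - 1%:M) = 0.
Proof.
move=> H; have -> : cosS s t = Fd (fun x => cos (x * t)) s by [].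
rewrite -(Fd1 s) FdN FdD; apply: mul_Fd0 => //.
by rewrite mul0r cos0 subrr.
Qed.
End Tr.

Lemma mx_eq_cols (R : realType) m p (M N : 'M[R]_(m,p)) :
  (forall v : 'cV_p, M *m v = N *m v) -> M = N.
Proof.
move=> H; apply/matrixP=> i j.
have := congr1 (fun w : 'cV[R]_m => w i 0) (H (delta_mx j 0)).
by rewrite -!colE !mxE.
Qed.

Lemma vec_surj (R : realType) k r (v : 'cV[R]_(r * k)) : vec (@vec_mx R r k v^T)^T = v.
Proof. by rewrite /vec trmxK vec_mxK trmxK. Qed.

End Part9.
Import Part9.
Theorem theorem6p4 (R : realType) (n r : nat)
    (X : 'M[R]_(n, r)) (Xp : 'M[R]_(n, n - r)) (Delta : 'M[R]_(n, r))
    (U : 'M[R]_(n, r)) (s : 'rV[R]_r) (V : 'M[R]_r)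
    (Ahat : 'M[R]_(r * (n - r))) (A : 'M[R]_(r * n)) :
  (r <= n)%N ->
  X^T *m X = 1%:M ->
  (row_mx X Xp)^T *m row_mx X Xp = 1%:M ->
  row_mx X Xp *m (row_mx X Xp)^T = 1%:M ->
  X^T *m Delta = 0 ->
  thin_svd Delta U s V ->
  global_op Xp Ahat A ->
  [/\ A = kron (1%:M : 'M[R]_r) Xp *m Ahat *m kron (1%:M : 'M[R]_r) Xp^T,
      Ahat = kron (1%:M : 'M[R]_r) Xp^T *m A *m kron (1%:M : 'M[R]_r) Xp
    & forall (t : R) (U2 : 'M[R]_(n, r)) (s2 : 'rV[R]_r) (V2 : 'M[R]_r),
        let T := transport X U s V t in
        let Xt := geodesic X U s V t in
        let Deltat := T *m Delta in
        thin_svd (- Deltat) U2 s2 V2 ->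
        let Ttil := transport Xt U2 s2 V2 t in
        let At := kron (1%:M : 'M[R]_r) T *m A *m kron (1%:M : 'M[R]_r) Ttil in
        let Xpt := T *m Xp in
        kron (1%:M : 'M[R]_r) Xpt^T *m At *m kron (1%:M : 'M[R]_r) Xpt = Ahat].
Proof.
move=> rn XX O1 O2 XD svd [gA gP].
have svd' := svd; case: svd' => UU [VV VV'] sp _ eD.
move: O1; rewrite tr_row_mx mul_col_row (scalar_mx_block r (n - r)).
move=> /eq_block_mx [_ XXp XpX XpXp].
set K := kron (1%:M : 'M[R]_r) Xp; set Kt := kron (1%:M : 'M[R]_r) Xp^T.
have AK : A *m K = K *m Ahat.
  apply: mx_eq_cols => v.
  have := gA (vec_mx v^T)^T (vec_mx (Ahat *m v)^T)^T.
  rewrite !vec_surj => /(_ erefl); rewrite -!kron_vec -/K !vec_surj.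
  by rewrite !mulmxA.
have KtK : Kt *m K = 1%:M by rewrite kron_mul mul1mx XpXp kron1.
have Aeq : A = K *m Ahat *m Kt.
  by rewrite {1}gP -(mul1mx (1%:M : 'M[R]_r)) -kron_mul mulmxA AK.
split => //.
  by rewrite -mulmxA AK mulmxA KtK mul1mx.
move=> t U2 s2 V2 T Xt Deltat svd2 Ttil At Xpt.
have Z0 : X^T *m U *m diag_mx s = 0.
  have -> : X^T *m U *m diag_mx s = X^T *m Delta *m V.
    by rewrite eD !mulmxA -(mulmxA _ V^T V) VV mulmx1.
  by rewrite XD mul0mx.
have Zc : X^T *m U *m (cosS s t - 1%:M) = 0 by apply: Zc_fact.
have cT : (cosS s t)^T = cosS s t by apply: tr_diag_mx.
have snT : (sinS s t)^T = sinS s t by apply: tr_diag_mx.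
have L : kron (1%:M : 'M[R]_r) Xpt^T *m kron (1%:M : 'M[R]_r) T *m K = 1%:M.
  rewrite !kron_mul !mul1mx.
  have -> : Xpt^T *m T *m Xp = (T *m Xp)^T *m (T *m Xp) by rewrite mulmxA.
  have TE : T = 1%:M + (U *m (cosS s t - 1%:M) - X *m (V *m sinS s t)) *m U^T.
    by rewrite /T transportE mulmxBr mulmx1 addrAC.
  by rewrite TE core_iso // ?kron1 // trig1.
have Rr : Kt *m kron (1%:M : 'M[R]_r) Ttil *m kron (1%:M : 'M[R]_r) Xpt = 1%:M.
  rewrite !kron_mul !mul1mx.
  rewrite /Deltat /T eD in svd2.
  have TtE := Ttil_eq UU XX VV Z0 sp svd2.
  rewrite /Ttil /Xt TtE /Xpt /T transportE.
  by rewrite (@core_back R _ _ _ _ _ _ _ _ _ UU XX VV XpX XpXp Zc cT snT (trig2 s t)) kron1.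
transitivity ((kron (1%:M : 'M[R]_r) Xpt^T *m kron (1%:M : 'M[R]_r) T *m K) *m Ahat *m
  (Kt *m kron (1%:M : 'M[R]_r) Ttil *m kron (1%:M : 'M[R]_r) Xpt)).
  by rewrite /At Aeq !mulmxA.
by rewrite L Rr mul1mx mulmx1.
Qed.
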